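(* Under the hypotheses and notation of the context, if $\sigma_k\ge\kappa_r\alpha$ for all $k\ge0$, then $$\|z^{k+1}-z^k\|_M\le C\min_{0\le j\le k}\rho^{k-j}\|z^{j+1}-z^j\|_M\quad\text{for all }k\ge0.$$
   Context: $X$ is a finite-dimensional real Hilbert space; $T:X\rightrightarrows X$ is maximal monotone with $\Omega:=T^{-1}(0)\neq\emptyset$. $M$ is self-adjoint positive definite with $\lambda_{\max}(M)=1$; $\|z\|_M=\sqrt{\langle z,Mz\rangle}$, $\operatorname{dist}_M(z,D)=\min_{d\in D}\|d-z\|_M$, $\operatorname{dist}=\operatorname{dist}_I$. $\mathcal{J}_{\sigma M^{-1}T}:=(I+\sigma M^{-1}T)^{-1}$. $z^+$ is an output of IGPPAstep$(z,\sigma,\eta,\delta,\gamma,M)$ if $z^+=\gamma w+(1-\gamma)z$ for some $w$ with $\|w-\mathcal{J}_{\sigma M^{-1}T}(z)\|_M\le\min\{\eta,\delta\|w-z\|_M\}$. Hypotheses: $T$ satisfies bounded metric subregularity (for every $r>0$ there is $\kappa_r>0$ with $\operatorname{dist}(z,\Omega)\le\kappa_r\operatorname{dist}(0,T(z))$ for all $\|z\|\le r$); $z^0\in X$, $\gamma\in(0,2)$, $\delta\in[0,1/2)$; $\{\sigma_k\},\{\eta_k\}$ nonnegative with $\sum_k\eta_k<\infty$, $\inf_k\sigma_k>0$; $z^{k+1}$ is an output of IGPPAstep$(z^k,\sigma_k,\eta_k,\delta,\gamma,M)$ for all $k$; $\bar z^0$ is a point of $\Omega$ nearest to $z^0$ in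 $\|\cdot\|_M$; $r\ge\|\bar z^0\|+\frac{1}{\lambda_{\min}(M)}(\operatorname{dist}_M(z^0,\Omega)+\gamma\sum_k\eta_k)$ and $\kappa_r$ is a subregularity constant at this $r$; $\alpha>0$ is such that $\rho:=\frac{1}{1-\delta}\Big(\sqrt{1-\frac{\min\{\gamma,2\gamma-\gamma^2\}\alpha^2}{\alpha^2+1}}+\delta\big(\frac{\min\{\gamma,1\}}{\sqrt{\alpha^2+1}}+1\big)\Big)<1$; $C:=\frac{1+\delta}{(1-\delta)(1-\sqrt{1/(\alpha^2+1)})}$. *)

(* Defs.v *)
(* R : realType, X = 'cV[R]_n with the standard inner product. *)
From HB Require Import structures.
From mathcomp Require Import all_boot all_order all_algebra.
From mathcomp Require Import all_classical all_reals all_analysis.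
Set Implicit Arguments. Unset Strict Implicit. Unset Printing Implicit Defensive.
Import Order.TTheory GRing.Theory Num.Theory.
Local Open Scope ring_scope.
Local Open Scope classical_set_scope.

Section Defs.
Variables (R : realType) (n : nat).
Implicit Types (x y z : 'cV[R]_n) (M : 'M[R]_n).

Definition ip x y : R := \sum_(i < n) x i 0 * y i 0.
Definition enorm x : R := Num.sqrt (ip x x).
Definition normM M z : R := Num.sqrt (ip z (M *m z)).
Definition dist z (D : set 'cV[R]_n) : R := inf [set enorm (d - z) | d in D].

Definition monotone (T : 'cV[R]_n -> set 'cV[R]_n) :=
  forall x y u v, T x u -> T y v -> 0 <= ip (x - y) (u - v).
Definition maximal_monotone (T : 'cV[R]_n -> set 'cV[R]_n) :=
  monotone T /\
  forall x u, (forall y v, T y v -> 0 <= ip (x - y) (u - v)) -> T x u.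

Definition zeros (T : 'cV[R]_n -> set 'cV[R]_n) : set 'cV[R]_n :=
  [set z | T z 0].

Definition self_adjoint_pd M :=
  M^T = M /\ forall z, z != 0 -> 0 < ip z (M *m z).

Definition is_lambda_max M (l : R) :=
  eigenvalue M l /\ forall a, eigenvalue M a -> a <= l.
Definition is_lambda_min M (l : R) :=
  eigenvalue M l /\ forall a, eigenvalue M a -> l <= a.

(* p = J_{sigma M^{-1} T}(z), i.e. z \in p + sigma M^{-1} T(p) *)
Definition resolvent_at (T : 'cV[R]_n -> set 'cV[R]_n) M (sigma : R) z p :=
  exists2 v, T p v & z = p + sigma *: (invmx M *m v).

Definition IGPPAstep_out (T : 'cV[R]_n -> set 'cV[R]_n) z sigma eta delta
    gamma M zp :=
  exists w, zp = gamma *: w + (1 - gamma) *: z /\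
    exists2 p, resolvent_at T M sigma z p &
      normM M (w - p) <= Num.min eta (delta * normM M (w - z)).

(* metric subregularity on the ball of radius r with constant kappa:
   dist(z, Omega) <= kappa dist(0, T z) for ||z|| <= r
   (dist(0, T z) = inf over v in T z of ||v||, +oo if T z is empty) *)
Definition subregular_at (T : 'cV[R]_n -> set 'cV[R]_n) (r kappa : R) :=
  forall z, enorm z <= r -> forall v, T z v -> dist z (zeros T) <= kappa * enorm v.

Definition bounded_metric_subregular (T : 'cV[R]_n -> set 'cV[R]_n) :=
  forall r : R, 0 < r -> exists2 kappa : R, 0 < kappa & subregular_at T r kappa.

End Defs.

(* Main.v *)
Require Import Defs.
From HB Require Import structures.
From mathcomp Require Import all_boot all_order all_algebra.
From mathcomp Require Import all_classical all_reals all_analysis.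
From mathcomp Require Import complex spectral sesquilinear ring lra.
Import Order.TTheory GRing.Theory Num.Theory numFieldNormedType.Exports.
Local Open Scope ring_scope.

Set Implicit Arguments. Unset Strict Implicit. Unset Printing Implicit Defensive.
Local Open Scope classical_set_scope.
Section Basic.
Variables (R : realType) (n : nat).
Implicit Types (x y z : 'cV[R]_n) (M : 'M[R]_n).

Lemma ipE x y : ip x y = (x^T *m y) 0 0.
Proof. by rewrite /ip mxE; apply: eq_bigr => i _; rewrite mxE. Qed.

Lemma ipC x y : ip x y = ip y x.
Proof. by rewrite /ip; apply: eq_bigr => i _; rewrite mulrC. Qed.

Lemma ipDl x y z : ip (x + y) z = ip x z + ip y z.
Proof. by rewrite /ip -big_split; apply: eq_bigr => i _; rewrite !mxE mulrDl. Qed.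

Lemma ipZl a x z : ip (a *: x) z = a * ip x z.
Proof. by rewrite /ip mulr_sumr; apply: eq_bigr => i _; rewrite !mxE mulrA. Qed.

Lemma ipNl x z : ip (- x) z = - ip x z.
Proof. by rewrite -scaleN1r ipZl mulN1r. Qed.

Lemma ipDr x y z : ip z (x + y) = ip z x + ip z y.
Proof. by rewrite ipC ipDl !(ipC z). Qed.

Lemma ipZr a x z : ip z (a *: x) = a * ip z x.
Proof. by rewrite ipC ipZl ipC. Qed.

Lemma ipNr x z : ip z (- x) = - ip z x.
Proof. by rewrite ipC ipNl ipC. Qed.

Lemma ipBl x y z : ip (x - y) z = ip x z - ip y z.
Proof. by rewrite ipDl ipNl. Qed.

Lemma ipBr x y z : ip z (x - y) = ip z x - ip z y.
Proof. by rewrite ipDr ipNr. Qed.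

Lemma ip_tr M x y : ip x (M *m y) = ip (M^T *m x) y.
Proof. by rewrite !ipE trmx_mul trmxK mulmxA. Qed.

Lemma ipxx_ge0 x : 0 <= ip x x.
Proof. by rewrite /ip sumr_ge0 // => i _; rewrite -expr2 sqr_ge0. Qed.

Lemma ipxx_eq0 x : ip x x = 0 -> x = 0.
Proof.
rewrite /ip => h; apply/matrixP => i j; rewrite ord1 mxE.
have h2 : forall k : 'I_n, true -> 0 <= x k 0 * x k 0.
  by move=> k _; rewrite -expr2 sqr_ge0.
have := psumr_eq0P h2 h (i := i) isT.
by move=> /eqP; rewrite mulf_eq0 orbb => /eqP.
Qed.

Lemma pd1 : self_adjoint_pd (1%:M : 'M[R]_n).
Proof.
split; first by rewrite trmx1.
move=> z nz; rewrite mul1mx lt_neqAle ipxx_ge0 andbT eq_sym.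
by apply/eqP => /ipxx_eq0 /eqP; apply/negP.
Qed.

Lemma enormE x : enorm x = normM 1%:M x.
Proof. by rewrite /normM mul1mx. Qed.

Lemma le_sqr_nneg (a b : R) : 0 <= b -> a ^+ 2 <= b ^+ 2 -> a <= b.
Proof.
move=> hb h; have [ha|ha] := lerP a 0; first exact: le_trans ha hb.
by rewrite -(@ler_pXn2r _ 2) // nnegrE ltW.
Qed.

Section PD.
Variable M : 'M[R]_n.
Hypothesis hM : self_adjoint_pd M.

Lemma ipM_sym x y : ip x (M *m y) = ip y (M *m x).
Proof. by rewrite ip_tr hM.1 ipC. Qed.

Lemma ipM_ge0 x : 0 <= ip x (M *m x).
Proof.
have [->|nz] := eqVneq x 0; first by rewrite mulmx0 /ip big1 // => i _; rewrite mxE mul0r.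
exact/ltW/hM.2.
Qed.

Lemma ipM_eq0 x : ip x (M *m x) = 0 -> x = 0.
Proof.
move=> h; have [//|nz] := eqVneq x 0.
by have := hM.2 x nz; rewrite h ltxx.
Qed.

Lemma normM_ge0 x : 0 <= normM M x.
Proof. exact: sqrtr_ge0. Qed.

Lemma normM_sq x : normM M x ^+ 2 = ip x (M *m x).
Proof. by rewrite sqr_sqrtr // ipM_ge0. Qed.

Lemma normM_sqD x y : normM M (x + y) ^+ 2
  = normM M x ^+ 2 + 2 * ip x (M *m y) + normM M y ^+ 2.
Proof.
rewrite !normM_sq mulmxDr !ipDl !ipDr (ipM_sym y x); ring.
Qed.

Lemma normMZ a x : normM M (a *: x) = `|a| * normM M x.
Proof.
rewrite /normM -scalemxAr ipZl ipZr mulrA -expr2 sqrtrM ?sqr_ge0 //.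
by rewrite sqrtr_sqr.
Qed.

Lemma normMN x : normM M (- x) = normM M x.
Proof. by rewrite -scaleN1r normMZ normrN1 mul1r. Qed.

Lemma normMB x y : normM M (x - y) = normM M (y - x).
Proof. by rewrite -normMN opprB. Qed.

Lemma normM0 : normM M 0 = 0.
Proof. by rewrite -(scale0r (0 : 'cV[R]_n)) normMZ normr0 mul0r. Qed.

Lemma CS x y : ip x (M *m y) <= normM M x * normM M y.
Proof.
have [->|nz] := eqVneq y 0.
  by rewrite mulmx0 /ip big1 ?mulr_ge0 ?normM_ge0 // => i _; rewrite mxE mulr0.
have qpos : 0 < normM M y ^+ 2 by rewrite normM_sq; exact: hM.2.
have key : forall t, 0 <= normM M x ^+ 2 - 2 * t * ip x (M *m y) + t ^+ 2 * normM M y ^+ 2.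
  move=> t; have := normM_sqD x ((- t) *: y).
  rewrite normMZ -scalemxAr ipZr exprMn normrN real_normK ?num_real // => e.
  have : 0 <= normM M (x + - t *: y) ^+ 2 by rewrite sqr_ge0.
  by rewrite e mulNr mulrN mulrA.
set u := ip x (M *m y) / normM M y ^+ 2.
have eu : ip x (M *m y) = u * normM M y ^+ 2.
  by rewrite /u divfK // gt_eqF.
have := key u; rewrite eu => h.
have ny := normM_ge0 y; have nx := normM_ge0 x.
have h2 : u ^+ 2 * normM M y ^+ 2 <= normM M x ^+ 2 by move: h; set a := normM M x; set b := normM M y; lra.
have ny0 : 0 < normM M y.
  by rewrite lt_neqAle ny andbT; apply/eqP => e0; move: qpos; rewrite -e0 expr0n ltxx.
set a := normM M x; set b := normM M y; have [hu|hu] := lerP u 0; first by apply: (@le_trans _ _ 0); [rewrite mulr_le0_ge0 ?sqr_ge0 | rewrite mulr_ge0].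

have : u * b <= a by apply: le_sqr_nneg => //; rewrite exprMn.
move=> hub; rewrite expr2 mulrA. by apply: ler_wpM2r; rewrite /b ?normM_ge0.
Qed.


Lemma normM_triangle x y : normM M (x + y) <= normM M x + normM M y.
Proof.
apply: le_sqr_nneg; first by rewrite addr_ge0 ?normM_ge0.
rewrite normM_sqD; have := CS x y; nra.
Qed.

Lemma normM_triangleB x y z : normM M (x - z) <= normM M (x - y) + normM M (y - z).
Proof.
have -> : x - z = (x - y) + (y - z) by rewrite addrA subrK.
exact: normM_triangle.
Qed.

End PD.
End Basic.
Section Spec.
Variable R : realType.
Local Open Scope complex_scope.
Local Open Scope sesquilinear_scope.
Local Notation phi := (real_complex R).

Lemma conj_mul_complex (y : R[i]) :
  (y^* * y)%R = ((complex.Re y)^+2 + (complex.Im y)^+2)%:C.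
Proof. case: y => a b. change ((a -i* b) * (a +i* b) = (a ^+ 2 + b ^+ 2)%:C)%R. simpc. congr (_ +i* _); ring. Qed.

Lemma quad_diag n (y : 'cV[R[i]]_n) (E : 'rV[R[i]]_n) :
  (y^t* *m diag_mx E *m y) 0 0
  = \sum_i E 0 i * ((complex.Re (y i 0))^+2 + (complex.Im (y i 0))^+2)%:C.
Proof.
rewrite mul_mx_diag mxE; apply: eq_bigr => i _.
by rewrite !mxE -conj_mul_complex mulrCA mulrA.
Qed.

Lemma phi_ip n (x z : 'cV[R]_n) :
  phi (ip x z) = ((map_mx phi x)^t* *m (map_mx phi z)) 0 0.
Proof.
rewrite ipE.
have -> : (map_mx phi x)^t* = map_mx phi x^T.
  apply/matrixP => i j; rewrite !mxE; exact: conjc_real.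
by rewrite -map_mxM [in RHS]mxE.
Qed.


Lemma spectral_real n (M : 'M[R]_n) : M^T = M ->
  exists d : 'I_n -> R, (forall i, eigenvalue M (d i)) /\
   forall x : 'cV[R]_n, exists c : 'I_n -> R, (forall i, 0 <= c i) /\
     ip x x = \sum_i c i /\ ip x (M *m x) = \sum_i d i * c i /\
     ip (M *m x) (M *m x) = \sum_i d i ^+ 2 * c i.
Proof.
move=> MT.
have Mji : forall i j, M j i = M i j.
  by move=> i j; rewrite -{1}MT mxE.
set MC := map_mx phi M.
have MCt : MC^t* = MC.
  apply/matrixP => i j; rewrite !mxE Mji; exact: conjc_real.
have normal : MC \is normalmx by apply/normalmxP; rewrite MCt.
have eqMC := orthomx_spectralP normal.
set U := spectralmx MC in eqMC; set D := spectral_diag MC in eqMC.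
have Uu : U \is unitarymx := spectral_unitarymx MC.
have UUt : U *m U^t* = 1%:M := unitarymxP Uu.
have UtU : U^t* *m U = 1%:M := mulmx1C UUt.
rewrite invmx_unitary // in eqMC.
have symMC : MC \is symmetricmx.
  apply/is_hermitianmxP; rewrite expr0 scale1r.
  by apply/matrixP => i j; rewrite !mxE Mji.
have realMC : MC \is a mxOver Num.real.
  by apply/mxOverP => i j; rewrite mxE; apply/complex_realP; exists (M i j).
have Dreal : D \is a mxOver Num.real :=
  hermitian_spectral_diag_real (realsym_hermsym symMC realMC).
pose d i := complex.Re (D 0 i).
have hd : forall i, (d i)%:C = D 0 i.
  by move=> i; apply: RRe_real; apply: (mxOverP Dreal).
have UMC : U *m MC = diag_mx D *m U.
  by rewrite eqMC !mulmxA UUt mul1mx.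
exists d; split.
  move=> i.
  have : eigenvalue MC (D 0 i).
    apply/eigenvalueP; exists (row i U).
      by rewrite -row_mul UMC mul_diag_mx; apply/rowP => j; rewrite !mxE.
    apply/eqP => /(congr1 (fun v => v *m U^t*)).
    rewrite -row_mul UUt mul0mx => /rowP /(_ i); rewrite !mxE eqxx /=.
    by move/eqP; rewrite oner_eq0.
  rewrite -hd !eigenvalue_root_char /MC -map_char_poly.
  by rewrite (fmorph_root (real_complex R)).
move=> x.
set xC := map_mx phi x.
set y := U *m xC.
pose c i := (complex.Re (y i 0))^+2 + (complex.Im (y i 0))^+2.
have ytr : y^t* = xC^t* *m U^t* by rewrite /y trmx_mul map_mxM.
exists c; split; first by move=> i; rewrite /c addr_ge0 // sqr_ge0.
have hMx : map_mx phi (M *m x) = MC *m xC by rewrite map_mxM.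
have DD : diag_mx D *m diag_mx D = diag_mx (\row_i (D 0 i ^+ 2)).
  apply/matrixP => i j; rewrite mul_diag_mx !mxE.
  by case: eqP => _; rewrite ?mulr0n ?mulr1n ?mulr0 ?expr2.
have MCMC : MC *m MC = U^t* *m diag_mx (\row_i (D 0 i ^+ 2)) *m U.
  rewrite {1}eqMC -!mulmxA UMC !mulmxA -DD !mulmxA //.
split.
  apply: complexI; rewrite phi_ip -/xC rmorph_sum.
  have -> : xC^t* *m xC = y^t* *m diag_mx (const_mx 1) *m y.
    rewrite diag_const_mx mulmx1 ytr /y mulmxA -(mulmxA (xC^t*)) UtU mulmx1 //.
  by rewrite quad_diag; apply: eq_bigr => i _; rewrite mxE mul1r.
split.
  apply: complexI; rewrite phi_ip -/xC hMx rmorph_sum.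
  have -> : xC^t* *m (MC *m xC) = y^t* *m diag_mx D *m y.
    by rewrite {1}eqMC ytr /y !mulmxA.
  by rewrite quad_diag; apply: eq_bigr => i _; rewrite -hd rmorphM.
apply: complexI; rewrite phi_ip hMx rmorph_sum.
have -> : (MC *m xC)^t* *m (MC *m xC) = y^t* *m diag_mx (\row_i (D 0 i ^+ 2)) *m y.
  rewrite trmx_mul map_mxM MCt -mulmxA (mulmxA MC) MCMC ytr /y !mulmxA //.
by rewrite quad_diag; apply: eq_bigr => i _; rewrite mxE -hd rmorphM rmorphXn.
Qed.

End Spec.

Section Spectral2.
Variables (R : realType) (n : nat) (M : 'M[R]_n) (lmin : R).
Hypothesis hM : self_adjoint_pd M.
Hypothesis hmax : is_lambda_max M 1.
Hypothesis hmin : is_lambda_min M lmin.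

Lemma lmin_pos : 0 < lmin.
Proof.
have [v hv nz] := eigenvalueP hmin.1.
pose x := v^T.
have Mx : M *m x = lmin *: x.
  by rewrite /x -{1}hM.1 -trmx_mul hv linearZ.
have xnz : x != 0 by rewrite /x trmx_eq0.
have h := hM.2 x xnz; rewrite Mx ipZr in h.
have hx : 0 < ip x x.
  by rewrite lt_neqAle ipxx_ge0 andbT eq_sym; apply/eqP => /ipxx_eq0 /eqP; apply/negP.
by rewrite pmulr_lgt0 in h.
Qed.

Lemma lmin_le1 : lmin <= 1.
Proof. exact: hmin.2 _ hmax.1. Qed.

Lemma spec_facts x :
  [/\ ip x (M *m x) <= ip x x, ip (M *m x) (M *m x) <= ip x (M *m x)
    & lmin * ip x x <= ip x (M *m x)].
Proof.
have [d [hd hx]] := @spectral_real R n M hM.1.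
have [c [c0 [e1 [e2 e3]]]] := hx x.
have d1 i : d i <= 1 := hmax.2 _ (hd i).
have dl i : lmin <= d i := hmin.2 _ (hd i).
have lp := lmin_pos.
rewrite e1 e2 e3; split.
- by apply: ler_sum => i _; have := c0 i; have := d1 i; nra.
- apply: ler_sum => i _; apply: ler_wpM2r => //; have := d1 i; have := dl i; nra.
- by rewrite mulr_sumr; apply: ler_sum => i _; apply: ler_wpM2r.
Qed.

Lemma normM_le_enorm x : normM M x <= enorm x.
Proof. by rewrite /normM /enorm ler_sqrt ?ipxx_ge0 //; case: (spec_facts x). Qed.

Lemma enormM_le x : enorm (M *m x) <= normM M x.
Proof. by rewrite /normM /enorm ler_sqrt ?(ipM_ge0 hM) //; case: (spec_facts x). Qed.

Lemma lmin_enorm x : lmin * enorm x <= normM M x.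
Proof.
have lp := lmin_pos; have l1 := lmin_le1.
have h1 : lmin <= Num.sqrt lmin.
  rewrite -{1}(ger0_norm (ltW lp)) -sqrtr_sqr (@ler_sqrt _ _ lmin (ltW lp)).
  nra.
apply: (@le_trans _ _ (Num.sqrt lmin * enorm x)).
  by apply: ler_wpM2r => //; exact: sqrtr_ge0.
rewrite /enorm /normM -(sqrtrM _ (ltW lp)) ler_sqrt ?(ipM_ge0 hM) //.
by case: (spec_facts x).
Qed.

Lemma M_unit : M \in unitmx.
Proof.
rewrite unitmxE unitfE; apply/negP => /det0P [v nz hv].
pose x := v^T.
have Mx : M *m x = 0 by rewrite /x -{1}hM.1 -trmx_mul hv trmx0.
have xnz : x != 0 by rewrite /x trmx_eq0.
have := hM.2 x xnz; rewrite Mx /ip big1 ?ltxx // => i _; by rewrite !mxE mulr0.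
Qed.

End Spectral2.

Section Op.
Variables (R : realType) (n : nat) (M : 'M[R]_n) (T : 'cV[R]_n -> set 'cV[R]_n).
Hypothesis hM : self_adjoint_pd M.
Hypothesis hT : maximal_monotone T.
Hypothesis hO : zeros T !=set0.
Hypothesis hU : M \in unitmx.

Local Notation Om := (zeros T).
Definition dM (x : 'cV[R]_n) : R := inf [set normM M (d - x) | d in Om].

Lemma dM_le d x : Om d -> dM x <= normM M (d - x).
Proof.
move=> hd; apply: ge_inf; last by exists d.
by exists 0 => _ [e _ <-]; exact: normM_ge0.
Qed.

Lemma dM_ge c x : (forall d, Om d -> c <= normM M (d - x)) -> c <= dM x.
Proof.
move=> h; apply: lb_le_inf.
  by case: hO => d hd; exists (normM M (d - x)), d.
by move=> _ [e he <-]; exact: h.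
Qed.

Lemma dM_ge0 x : 0 <= dM x.
Proof. by apply: dM_ge => d _; exact: normM_ge0. Qed.

Lemma dM_geZ lam c x : 0 <= lam ->
  (forall d, Om d -> c <= lam * normM M (d - x)) -> c <= lam * dM x.
Proof.
move=> hl h; have [l0|lpos] := eqVneq lam 0.
  by case: hO => d hd; have := h d hd; rewrite l0 !mul0r.
have lp : 0 < lam by rewrite lt_neqAle eq_sym lpos hl.
rewrite -ler_pdivrMl //; apply: dM_ge => d hd.
by rewrite ler_pdivrMl // h.
Qed.

Lemma dM_le_dist (hle : forall x, normM M x <= enorm x) p : dM p <= dist p Om.
Proof.
apply: lb_le_inf.
  by case: hO => d hd; exists (enorm (d - p)), d.
move=> _ [e he <-]; exact: le_trans (dM_le p he) (hle _).
Qed.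

Lemma Om_convex l a b : 0 <= l <= 1 -> Om a -> Om b -> Om (l *: a + (1 - l) *: b).
Proof.
move=> /andP [l0 l1] ha hb; apply: hT.2 => y v hyv.
have -> : l *: a + (1 - l) *: b - y = l *: (a - y) + (1 - l) *: (b - y).
  by apply/matrixP => i j; rewrite !mxE; ring.
have h1 : 0 <= ip (a - y) (0 - v) := hT.1 _ _ _ _ ha hyv.
have h2 : 0 <= ip (b - y) (0 - v) := hT.1 _ _ _ _ hb hyv.
rewrite ipDl !ipZl addr_ge0 // mulr_ge0 // subr_ge0 //.
Qed.

End Op.

Section Numeric.
Variables (R : realType) (g d a : R).
Hypothesis hg : 0 < g < 2.
Hypothesis hd : 0 <= d < 1 / 2.
Hypothesis ha : 0 < a.
Local Notation s := (Num.sqrt (1 / (a ^+ 2 + 1))).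
Local Notation m := (Num.min g (2 * g - g ^+ 2)).
Local Notation R0 := (Num.sqrt (1 - m * a ^+ 2 / (a ^+ 2 + 1))).

Lemma a2pos : 0 < a ^+ 2 + 1.
Proof. by rewrite ltr_wpDl // sqr_ge0. Qed.

Lemma s2E : s ^+ 2 = 1 / (a ^+ 2 + 1).
Proof. by rewrite sqr_sqrtr // divr_ge0 // ltW // a2pos. Qed.

Lemma s_ge0 : 0 <= s. Proof. exact: sqrtr_ge0. Qed.

Lemma tE : a ^+ 2 / (a ^+ 2 + 1) = 1 - 1 / (a ^+ 2 + 1).
Proof. have := a2pos; move=> h; field; by rewrite gt_eqF. Qed.

Lemma u_lt1 : 1 / (a ^+ 2 + 1) < 1.
Proof.
rewrite ltr_pdivrMr ?a2pos // mul1r ltrDr.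
by rewrite exprn_gt0.
Qed.

Lemma u_gt0 : 0 < 1 / (a ^+ 2 + 1).
Proof. by rewrite divr_gt0 // a2pos. Qed.

Lemma s_lt1 : s < 1.
Proof.
by have := u_lt1; rewrite -ltr_sqrt ?ltr01 // sqrtr1.
Qed.


Lemma m_small : g <= 1 -> m = g.
Proof. by move=> g1; rewrite min_l //; case/andP: hg => g0 _; nra. Qed.

Lemma m_big : 1 <= g -> m = 2 * g - g ^+ 2.
Proof. by move=> g1; rewrite min_r //; case/andP: hg => g0 _; nra. Qed.

Lemma m01 : 0 <= m <= 1.
Proof.
case/andP: hg => g0 g2.
have [g1|g1] := lerP g 1; first by rewrite m_small // (ltW g0) g1.
by rewrite m_big ?(ltW g1) //; apply/andP; split; nra.
Qed.

Lemma R0sq : R0 ^+ 2 = 1 - m * (1 - 1 / (a ^+ 2 + 1)).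
Proof.
have /andP [m0 m1] := m01.
have t1 : a ^+ 2 / (a ^+ 2 + 1) <= 1 by rewrite tE lerBlDr lerDl ltW // u_gt0.
have t0 : 0 <= a ^+ 2 / (a ^+ 2 + 1) by rewrite divr_ge0 ?sqr_ge0 // ltW // a2pos.
have arg0 : 0 <= 1 - m * a ^+ 2 / (a ^+ 2 + 1).
  rewrite -mulrA; nra.
by rewrite sqr_sqrtr // -mulrA tE.
Qed.

Lemma R0_ge0 : 0 <= R0. Proof. exact: sqrtr_ge0. Qed.

Lemma N1 : g <= 1 -> (1 - g) + g * s <= R0.
Proof.
move=> g1; case/andP: hg => g0 g2.
apply: le_sqr_nneg; first exact: R0_ge0.
rewrite R0sq m_small //.
have hs := s_ge0; have e := s2E.
have h : 0 <= g * (1 - g) * (1 - s) ^+ 2.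
  by rewrite mulr_ge0 ?sqr_ge0 // mulr_ge0 // ?subr_ge0 // ltW.
move: hs e h; set S := Num.sqrt _ => hs e h.
rewrite -e; nra.
Qed.

Lemma N2 : 1 <= g -> (g - 1) ^+ 2 + (1 - (g - 1) ^+ 2) * s ^+ 2 = R0 ^+ 2.
Proof. by move=> g1; rewrite R0sq m_big // s2E; ring. Qed.

Lemma N2' : 1 <= g -> 0 <= (g - 1) ^+ 2 <= 1.
Proof. move=> g1; case/andP: hg => g0 g2; rewrite sqr_ge0 /=; nra. Qed.

Lemma gR0 : g - 1 <= R0.
Proof.
case/andP: hg => g0 g2.
have [g1|g1] := lerP g 1.
  by apply: le_trans (R0_ge0); rewrite subr_le0.
apply: le_sqr_nneg; first exact: R0_ge0.
rewrite R0sq m_big ?(ltW g1) //.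
have hu := u_gt0.
have h : 0 <= (2 * g - g ^+ 2) * (1 / (a ^+ 2 + 1)).
  by apply: mulr_ge0; [nra | exact: ltW hu].
nra.
Qed.

Lemma N3 : R0 + g * d / (1 - d) <=
  (1 - d)^-1 * (R0 + d * (Num.min g 1 / Num.sqrt (a ^+ 2 + 1) + 1)).
Proof.
case/andP: hd => d0 d1; case/andP: hg => g0 g2.
have dpos : 0 < 1 - d by rewrite subr_gt0; apply: lt_trans d1 _; lra.
set X := Num.min g 1 / Num.sqrt (a ^+ 2 + 1).
have X0 : 0 <= X.
  by rewrite divr_ge0 ?sqrtr_ge0 // le_min ltW //= ler01.
rewrite -subr_ge0.
have -> : (1 - d)^-1 * (R0 + d * (X + 1)) - (R0 + g * d / (1 - d))
   = (d * (R0 + 1 - g) + d * X) / (1 - d).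
  by field; rewrite gt_eqF.
have := gR0; move=> h.
apply: divr_ge0; last exact: ltW dpos.
by apply: addr_ge0; apply: mulr_ge0 => //; lra.
Qed.

End Numeric.

Section Step.
Variables (R : realType) (n : nat) (M : 'M[R]_n) (T : 'cV[R]_n -> set 'cV[R]_n).
Hypothesis hM : self_adjoint_pd M.
Hypothesis hT : maximal_monotone T.
Hypothesis hU : M \in unitmx.
Variables (g : R) (z p v : 'cV[R]_n) (sig : R).
Hypothesis hg : 0 < g < 2.
Hypothesis hv : T p v.
Hypothesis hz : z = p + sig *: (invmx M *m v).
Hypothesis hsig : 0 <= sig.

Local Notation Om := (zeros T).
Local Notation q := (g *: p + (1 - g) *: z).

Lemma Mzp : M *m (z - p) = sig *: v.
Proof.
have -> : z - p = sig *: (invmx M *m v) by rewrite hz addrC addKr.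
by rewrite scalemxAr mulmxA mulmxV // mul1mx.
Qed.

Lemma mono_G zh : Om zh -> 0 <= ip (p - zh) (M *m (z - p)).
Proof.
move=> hzh; rewrite Mzp ipZr mulr_ge0 //.
by have := hT.1 _ _ _ _ hv hzh; rewrite subr0.
Qed.

Lemma sq_z zh : normM M (z - zh) ^+ 2
  = normM M (p - zh) ^+ 2 + 2 * ip (p - zh) (M *m (z - p)) + normM M (z - p) ^+ 2.
Proof.
have -> : z - zh = (p - zh) + (z - p) by apply/matrixP => i j; rewrite !mxE; ring.
exact: normM_sqD.
Qed.

Lemma sq_q zh : normM M (q - zh) ^+ 2
  = normM M (p - zh) ^+ 2 + 2 * ((1 - g) * ip (p - zh) (M *m (z - p)))
    + (1 - g) ^+ 2 * normM M (z - p) ^+ 2.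
Proof.
have -> : q - zh = (p - zh) + (1 - g) *: (z - p).
  by apply/matrixP => i j; rewrite !mxE; ring.
rewrite normM_sqD // normMZ // -scalemxAr ipZr exprMn real_normK // num_real //.
Qed.

Lemma firm zh : Om zh ->
  normM M (p - zh) ^+ 2 + normM M (z - p) ^+ 2 <= normM M (z - zh) ^+ 2.
Proof. move=> hzh; rewrite (sq_z zh); have := mono_G hzh; lra. Qed.

Lemma fejer_q zh : Om zh -> normM M (q - zh) <= normM M (z - zh).
Proof.
move=> hzh; apply: le_sqr_nneg; first exact: normM_ge0.
rewrite (sq_q zh) (sq_z zh); have := mono_G hzh; case/andP: hg => g0 g2.
set G := ip _ _; set A := normM M (z - p) => hG.
have h1 : 0 <= g * G by rewrite mulr_ge0 // ltW.
have h2 : 0 <= g * (2 - g) * A ^+ 2 by rewrite mulr_ge0 ?sqr_ge0 // mulr_ge0 ?subr_ge0 // ltW.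
nra.
Qed.

Lemma p_close zh : Om zh -> normM M (p - zh) <= normM M (z - zh).
Proof.
move=> hzh; apply: le_sqr_nneg; first exact: normM_ge0.
have := firm hzh; have := sqr_ge0 (normM M (z - p)); lra.
Qed.

Lemma z_p_close zh : Om zh -> normM M (z - p) <= normM M (z - zh).
Proof.
move=> hzh; apply: le_sqr_nneg; first exact: normM_ge0.
have := firm hzh; have := sqr_ge0 (normM M (p - zh)); lra.
Qed.

Lemma q_big zh : Om zh -> 1 <= g ->
  normM M (q - zh) ^+ 2 <= normM M (p - zh) ^+ 2 + (g - 1) ^+ 2 * normM M (z - p) ^+ 2.
Proof.
move=> hzh g1; rewrite (sq_q zh); have := mono_G hzh.
set G := ip _ _ => hG.
have h : (1 - g) * G <= 0 by rewrite mulr_le0_ge0 // subr_le0.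
have -> : (1 - g) ^+ 2 = (g - 1) ^+ 2 by rewrite -sqrrN opprB.
lra.
Qed.


Variables (d a r k eta : R) (w zp : 'cV[R]_n).
Hypothesis hO : Om !=set0.
Hypothesis hd : 0 <= d < 1 / 2.
Hypothesis ha : 0 < a.
Hypothesis hk : 0 < k.
Hypothesis hreg : subregular_at T r k.
Hypothesis hsa : k * a <= sig.
Hypothesis hball : enorm p <= r.
Hypothesis hzp : zp = g *: w + (1 - g) *: z.
Hypothesis hw : normM M (w - p) <= Num.min eta (d * normM M (w - z)).
Hypothesis hle : forall x, normM M x <= enorm x.
Hypothesis hMle : forall x, enorm (M *m x) <= normM M x.

Local Notation D := (dM M T).
Local Notation A := (normM M (z - p)).
Local Notation B := (dM M T p).
Local Notation s := (Num.sqrt (1 / (a ^+ 2 + 1))).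

Lemma nwp_le : normM M (w - p) <= d * normM M (w - z).
Proof. by move: hw; rewrite le_min => /andP [_ h]. Qed.

Lemma nwp_eta : normM M (w - p) <= eta.
Proof. by move: hw; rewrite le_min => /andP [h _]. Qed.

Lemma S1 : normM M (zp - z) = g * normM M (w - z).
Proof.
have -> : zp - z = g *: (w - z) by rewrite hzp; apply/matrixP => i j; rewrite !mxE; ring.
by rewrite normMZ ger0_norm // ltW //; case/andP: hg.
Qed.

Lemma S2 : (1 - d) * normM M (w - z) <= A.
Proof.
have := normM_triangleB hM w p z; rewrite (normMB M p z).
have := nwp_le; lra.
Qed.

Lemma S3 : A <= (1 + d) * normM M (w - z).
Proof.
have := normM_triangleB hM z w p; rewrite (normMB M z w).
have := nwp_le; lra.
Qed.

Lemma S4 : A <= D z.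
Proof. by apply: (dM_ge hO) => zh hzh; rewrite (normMB M zh z); exact: z_p_close. Qed.

Lemma B1 : B ^+ 2 + A ^+ 2 <= D z ^+ 2.
Proof.
have hB := dM_ge0 M hO p.
have h : Num.sqrt (B ^+ 2 + A ^+ 2) <= D z.
  apply: (dM_ge hO) => zh hzh; apply: le_sqr_nneg; first exact: normM_ge0.
  rewrite sqr_sqrtr ?addr_ge0 ?sqr_ge0 // (normMB M zh z).
  have h1 := dM_le M p hzh; rewrite (normMB M zh p) in h1.
  have h2 := firm hzh; have h3 := normM_ge0 M (p - zh); nra.
have h0 := sqrtr_ge0 (B ^+ 2 + A ^+ 2).
rewrite -[B ^+ 2 + A ^+ 2]sqr_sqrtr ?addr_ge0 ?sqr_ge0 //; nra.
Qed.


Lemma B2 : a * B <= A.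
Proof.
have h1 := dM_le_dist hO hle p.
have h2 := hreg hball hv.
have e : enorm (sig *: v) = sig * enorm v by rewrite !enormE normMZ ger0_norm.
have h3 : sig * enorm v <= A by rewrite -e -Mzp; exact: hMle.
have ev : 0 <= enorm v := sqrtr_ge0 _.
have h4 : k * a * enorm v <= sig * enorm v by apply: ler_wpM2r.
have h5 : a * B <= a * (k * enorm v) by apply: ler_wpM2l; [exact: ltW | exact: le_trans h1 h2].
lra.
Qed.

Lemma B3 : B <= s * D z.
Proof.
have hB := dM_ge0 M hO p; have hD := dM_ge0 M hO z.
have hB2 : (a * B) ^+ 2 <= A ^+ 2.
  have := B2; have := mulr_ge0 (ltW ha) hB; nra.
have h1 := B1.
have h2 : B ^+ 2 * (a ^+ 2 + 1) <= D z ^+ 2 by rewrite exprMn in hB2; nra.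
apply: le_sqr_nneg; first by rewrite mulr_ge0 // sqrtr_ge0.
rewrite exprMn s2E mul1r mulrC ler_pdivlMr //; exact: a2pos.
Qed.

Lemma B4 : D z <= A + B.
Proof.
have : D z - A <= B.
  apply: (dM_ge hO) => zh hzh.
  have h1 := dM_le M z hzh.
  have h2 := normM_triangleB hM zh p z; rewrite (normMB M p z) in h2.
  lra.
lra.
Qed.

Lemma S5 : (1 - s) * D z <= A.
Proof. have := B4; have := B3; lra. Qed.

Lemma E_small : g <= 1 -> dM M T q <= (1 - g) * D z + g * B.
Proof.
move=> g1; case/andP: hg => g0 g2.
have key : forall zh1 zh2, Om zh1 -> Om zh2 ->
    dM M T q <= g * normM M (zh2 - p) + (1 - g) * normM M (zh1 - z).
  move=> zh1 zh2 h1 h2.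
  have hzh : Om (g *: zh2 + (1 - g) *: zh1).
    by apply: (Om_convex hT) => //; rewrite (ltW g0) g1.
  apply: le_trans (dM_le M q hzh) _.
  have -> : g *: zh2 + (1 - g) *: zh1 - q = g *: (zh2 - p) + (1 - g) *: (zh1 - z).
    by apply/matrixP => i j; rewrite !mxE; ring.
  apply: le_trans (normM_triangle hM _ _) _.
  by rewrite !normMZ !ger0_norm ?subr_ge0 // ltW.
have : dM M T q - g * B <= (1 - g) * D z.
  apply: (dM_geZ hO); first by rewrite subr_ge0.
  move=> zh1 h1.
  have : dM M T q - (1 - g) * normM M (zh1 - z) <= g * B.
    apply: (dM_geZ hO); first exact: ltW.
    move=> zh2 h2; have := key _ _ h1 h2; lra.
  lra.
lra.
Qed.

Lemma E_big : 1 <= g -> dM M T q ^+ 2 <= B ^+ 2 + (g - 1) ^+ 2 * A ^+ 2.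
Proof.
move=> g1.
have hB := dM_ge0 M hO p; have hq := dM_ge0 M hO q.
set c := dM M T q ^+ 2 - (g - 1) ^+ 2 * A ^+ 2.
have [c0|c0] := lerP c 0.
  have := sqr_ge0 B; rewrite /c in c0; lra.
have h : Num.sqrt c <= B.
  apply: (dM_ge hO) => zh hzh.
  apply: le_sqr_nneg; first exact: normM_ge0.
  rewrite (sqr_sqrtr (ltW c0)) /c (normMB M zh p).
  have h1 := dM_le M q hzh; rewrite (normMB M zh q) in h1.
  have h2 := q_big hzh g1.
  have h3 : dM M T q ^+ 2 <= normM M (q - zh) ^+ 2.
    nra.
  lra.
have : c <= B ^+ 2.
  have hs := sqrtr_ge0 c.
  rewrite -(sqr_sqrtr (ltW c0)); nra.
rewrite /c; lra.
Qed.


Local Notation R0 := (Num.sqrt (1 - Num.min g (2 * g - g ^+ 2) * a ^+ 2 / (a ^+ 2 + 1))).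

Lemma ER : dM M T q <= R0 * D z.
Proof.
have hB := dM_ge0 M hO p; have hD := dM_ge0 M hO z; have hs := s_ge0 a.
have hb3 := B3.
have [g1|g1] := lerP g 1.
  apply: le_trans (E_small g1) _.
  have hn := N1 a hg g1.
  case/andP: hg => g0 g2.
  have : (1 - g) * D z + g * B <= ((1 - g) + g * s) * D z.
    nra.
  move=> h; apply: le_trans h _; exact: ler_wpM2r.
have g1' : 1 <= g by exact: ltW.
apply: le_sqr_nneg; first by rewrite mulr_ge0 // R0_ge0.
apply: le_trans (E_big g1') _.
rewrite exprMn -(N2 a hg g1').
have /andP [e0 e1] := N2' hg g1'.
have h1 := B1.
have h2 : B ^+ 2 <= s ^+ 2 * D z ^+ 2.
  rewrite -exprMn; have := mulr_ge0 hs hD; nra.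
have h3 : 0 <= (g - 1) ^+ 2 * (D z ^+ 2 - B ^+ 2 - A ^+ 2) by rewrite mulr_ge0 //; lra.
have h4 : 0 <= (1 - (g - 1) ^+ 2) * (s ^+ 2 * D z ^+ 2 - B ^+ 2).
  by rewrite mulr_ge0 //; lra.
nra.
Qed.

Lemma S6 : D zp <= dM M T q + g * normM M (w - p).
Proof.
case/andP: hg => g0 g2.
have : D zp - g * normM M (w - p) <= dM M T q.
  apply: (dM_ge hO) => zh hzh.
  have h1 := dM_le M zp hzh.
  have h2 := normM_triangleB hM zh q zp.
  have e : q - zp = g *: (p - w) by rewrite hzp; apply/matrixP => i j; rewrite !mxE; ring.
  rewrite e normMZ ger0_norm ?(ltW g0) // (normMB M p w) in h2.
  lra.
lra.
Qed.

Lemma P3 : D zp <= (1 - d)^-1 * (R0 + d * (Num.min g 1 / Num.sqrt (a ^+ 2 + 1) + 1)) * D z.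
Proof.
have hD := dM_ge0 M hO z.
case/andP: hg => g0 g2; case/andP: hd => d0 d1.
have dpos : 0 < 1 - d by lra.
apply: le_trans S6 _.
apply: le_trans (ler_wpM2r hD (N3 a hg hd)).
rewrite mulrDl; apply: lerD; first exact: ER.
have h1 : g * normM M (w - p) <= g * (d * normM M (w - z)).
  by apply: ler_wpM2l; [exact: ltW | exact: nwp_le].
apply: le_trans h1 _.
rewrite mulrAC ler_pdivlMr //.
have := S2; have := S4; have := normM_ge0 M (w - z); move=> hn h4 h2.
have h5 : (1 - d) * normM M (w - z) <= D z by lra.
have h6 : 0 <= g * d by rewrite mulr_ge0 // ltW.
nra.
Qed.

Lemma P1 : normM M (zp - z) <= g / (1 - d) * D z.
Proof.
case/andP: hg => g0 g2; case/andP: hd => d0 d1.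
have dpos : 0 < 1 - d by lra.
rewrite S1 mulrAC ler_pdivlMr //.
have := S2; have := S4; move=> h4 h2.
have h5 : (1 - d) * normM M (w - z) <= D z by lra.
nra.
Qed.

Lemma P2 : g * (1 - s) * D z <= (1 + d) * normM M (zp - z).
Proof.
case/andP: hg => g0 g2.
rewrite S1; have := S5; have := S3; move=> h3 h5.
have h6 : (1 - s) * D z <= (1 + d) * normM M (w - z) by lra.
nra.
Qed.

End Step.

Unset Implicit Arguments. Set Strict Implicit. Set Printing Implicit Defensive.

Theorem corollary3 (R : realType) (n : nat)
  (T : 'cV[R]_n -> set 'cV[R]_n) (M : 'M[R]_n) (lmin : R)
  (z : nat -> 'cV[R]_n) (sigma eta : nat -> R)
  (gamma delta r kappa alpha : R) (zbar0 : 'cV[R]_n) :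
  maximal_monotone T ->
  zeros T !=set0 ->
  self_adjoint_pd M ->
  is_lambda_max M 1 ->
  is_lambda_min M lmin ->
  bounded_metric_subregular T ->
  0 < gamma < 2 ->
  0 <= delta < 1 / 2 ->
  (forall k, 0 <= sigma k) ->
  (forall k, 0 <= eta k) ->
  cvgn (series eta) ->
  0 < inf (range sigma) ->
  (forall k, IGPPAstep_out T (z k) (sigma k) (eta k) delta gamma M (z k.+1)) ->
  zbar0 \in zeros T ->
  (forall d, d \in zeros T -> normM M (zbar0 - z 0%N) <= normM M (d - z 0%N)) ->
  enorm zbar0
    + lmin^-1 * (normM M (zbar0 - z 0%N) + gamma * limn (series eta)) <= r ->
  0 < kappa ->
  subregular_at T r kappa ->
  0 < alpha ->
  let rho := (1 - delta)^-1 *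
      (Num.sqrt (1 - Num.min gamma (2 * gamma - gamma ^+ 2) * alpha ^+ 2
                       / (alpha ^+ 2 + 1))
       + delta * (Num.min gamma 1 / Num.sqrt (alpha ^+ 2 + 1) + 1)) in
  let C := (1 + delta) /
      ((1 - delta) * (1 - Num.sqrt (1 / (alpha ^+ 2 + 1)))) in
  rho < 1 ->
  (forall k, kappa * alpha <= sigma k) ->
  forall k : nat, forall j : nat, (j <= k)%N ->
    normM M (z k.+1 - z k) <= C * (rho ^+ (k - j) * normM M (z j.+1 - z j)).
Proof.
move=> hT hO hM hmax hmin hBMS hg hd hsig heta hcvg hinf hstep hz0 hnear hr hk hreg ha
  rho C hrho hka k j hjk.
have hU := M_unit hM.
have hle := normM_le_enorm hM hmax hmin.
have hMle := enormM_le hM hmax hmin.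
have lp := lmin_pos hM hmin.
have hz0' : zeros T zbar0 by rewrite -in_setE.
have /andP [g0 g2] := hg; have /andP [d0 d1] := hd.
have s0 : series eta 0 = 0 by rewrite /series /= big_geq.
have smono : {homo series eta : a b / (a <= b)%N >-> a <= b}.
  by move=> a b hab; rewrite -subr_ge0 sub_series_geq // sumr_ge0.
have slim : forall m, series eta m <= limn (series eta).
  exact: nondecreasing_cvgn_le.
have fej : forall m, normM M (z m - zbar0) <= normM M (z 0%N - zbar0) + gamma * series eta m.
  elim => [|m IH]; first by rewrite s0 mulr0 addr0.
  have [w [hzm [p [v hv hzv] hw]]] := hstep m.
  have hq := fejer_q hM hT hU hg hv hzv (hsig m) hz0'.
  have e : z m.+1 - zbar0 = (gamma *: p + (1 - gamma) *: z m - zbar0) + gamma *: (w - p).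
    by rewrite hzm; apply/matrixP => i jj; rewrite !mxE; ring.
  rewrite e; apply: le_trans (normM_triangle hM _ _) _.
  rewrite normMZ ger0_norm ?(ltW g0) // seriesSr.
  have : normM M (w - p) <= eta m by move: hw; rewrite le_min => /andP [].
  move=> hwp.
  have := ler_wpM2l (ltW g0) hwp; lra.
have ball : forall m p v, T p v -> z m = p + sigma m *: (invmx M *m v) -> enorm p <= r.
  move=> m p v hv hzv.
  have h1 := p_close hM hT hU hv hzv (hsig m) hz0'.
  have h2 := lmin_enorm hM hmax hmin (p - zbar0).
  have h3 : enorm p <= enorm zbar0 + enorm (p - zbar0).
    have e : zbar0 + (p - zbar0) = p by rewrite addrC subrK.
    by have := normM_triangle (pd1 R n) zbar0 (p - zbar0); rewrite e -!enormE.
  have h4 := fej m; have h5 := slim m.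
  have h6 : enorm (p - zbar0) <= lmin^-1 * (normM M (zbar0 - z 0%N) + gamma * limn (series eta)).
    rewrite -(ler_pM2l lp) mulrA mulfV ?gt_eqF // mul1r.
    rewrite (normMB M zbar0 (z 0%N)).
    have := ler_wpM2l (ltW g0) h5; lra.
  lra.
pose s := Num.sqrt (1 / (alpha ^+ 2 + 1)).
have P : forall m, [/\ normM M (z m.+1 - z m) <= gamma / (1 - delta) * dM M T (z m),
   gamma * (1 - s) * dM M T (z m) <= (1 + delta) * normM M (z m.+1 - z m)
 & dM M T (z m.+1) <= rho * dM M T (z m)].
  move=> m.
  have [w [hzm [p [v hv hzv] hw]]] := hstep m.
  have hb := ball m p v hv hzv.
  split.
  - exact: (P1 hM hT hU hg hv hzv (hsig m) hO hd hzm hw).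
  - exact: (P2 hM hT hU hg hv hzv (hsig m) hO ha hreg (hka m) hb hzm hw hle hMle).
  - exact: (P3 hM hT hU hg hv hzv (hsig m) hO hd ha hreg (hka m) hb hzm hw hle hMle).
have rho0 : 0 <= rho.
  rewrite /rho; apply: mulr_ge0; first by rewrite invr_ge0; lra.
  apply: addr_ge0; first exact: sqrtr_ge0.
  apply: mulr_ge0 => //; apply: addr_ge0 => //; apply: divr_ge0; last exact: sqrtr_ge0.
  by rewrite le_min (ltW g0) ler01.
have geo : forall i, dM M T (z (j + i)%N) <= rho ^+ i * dM M T (z j).
  elim => [|i IH]; first by rewrite addn0 expr0 mul1r.
  rewrite addnS exprS -mulrA; case: (P (j + i)%N) => _ _ h; apply: le_trans h _.
  exact: (ler_wpM2l rho0 IH).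
have [h1 _ _] := P k.
have [_ h2 _] := P j.
have hg' := geo (k - j)%N; rewrite subnKC // in hg'.
have sl1 : s < 1 := s_lt1 ha.
have X0 : 0 <= rho ^+ (k - j) := exprn_ge0 _ rho0.
have Dj0 := dM_ge0 M hO (z j).
have hdpos : 0 < 1 - delta by lra.
have hspos : 0 < 1 - s by lra.
apply: le_trans h1 _.
apply: le_trans (ler_wpM2l _ hg') _; first by rewrite divr_ge0 // ltW.
have e1 : gamma / (1 - delta) * (rho ^+ (k - j) * dM M T (z j))
   = (rho ^+ (k - j) / ((1 - delta) * (1 - s))) * (gamma * (1 - s) * dM M T (z j)).
  by field; rewrite (gt_eqF hspos) (gt_eqF hdpos).
have e2 : C * (rho ^+ (k - j) * normM M (z j.+1 - z j))
   = (rho ^+ (k - j) / ((1 - delta) * (1 - s))) * ((1 + delta) * normM M (z j.+1 - z j)).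
  by rewrite /C -/s; field; rewrite (gt_eqF hspos) (gt_eqF hdpos).
rewrite e1 e2; apply: ler_wpM2l => //.
by rewrite divr_ge0 // mulr_ge0 // ltW.
Qed.
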